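(* Let $k$ be a real division algebra, $\mathcal Z\subset k$ a discrete subring closed under conjugation, $(a_n)_{n\ge1}$ a sequence in $\mathcal Z$ and $x_0\in k$ with $x_n=T_{a_n}\cdots T_{a_1}x_0$ defined and $\|x_n\|<1$ for all $n\ge0$. Define $Q[\cdot]$ recursively by $P[a_n]=1$, $Q[a_n]=a_n$, and for $i<n$, $P[a_i,\dots,a_n]=Q[a_{i+1},\dots,a_n]$, $Q[a_i,\dots,a_n]=a_iQ[a_{i+1},\dots,a_n]+P[a_{i+1},\dots,a_n]$. Then $Q[a_i,\dots,a_n]\ne0$ for every $n$ and every $1\le i<n$.
   Context: $k\in\{\mathbb{R},\mathbb{C},\mathbb{H},\mathbb{O}\}$ with Euclidean norm $\|x\|^2=x\overline x$; $T_ax=x^{-1}-a$. Discrete means discrete in the Euclidean topology of $k\cong\mathbb{R}^d$. *)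

(* Defs.v *)
From Stdlib Require Import Reals.
Open Scope R_scope.

(* CD 0 = R, CD 1 = C, CD 2 = H, CD 3 = O (pairs of the previous level). *)
Fixpoint CD (n : nat) : Type :=
  match n with O => R | S m => (CD m * CD m)%type end.

Fixpoint cd_zero (n : nat) : CD n :=
  match n return CD n with O => 0 | S m => (cd_zero m, cd_zero m) end.

Fixpoint cd_one (n : nat) : CD n :=
  match n return CD n with O => 1 | S m => (cd_one m, cd_zero m) end.

Fixpoint cd_add (n : nat) : CD n -> CD n -> CD n :=
  match n return CD n -> CD n -> CD n with
  | O => Rplus
  | S m => fun x y => (cd_add m (fst x) (fst y), cd_add m (snd x) (snd y))
  end.

Fixpoint cd_opp (n : nat) : CD n -> CD n :=
  match n return CD n -> CD n with
  | O => Ropp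
  | S m => fun x => (cd_opp m (fst x), cd_opp m (snd x))
  end.

Definition cd_sub (n : nat) (x y : CD n) : CD n := cd_add n x (cd_opp n y).

Fixpoint cd_conj (n : nat) : CD n -> CD n :=
  match n return CD n -> CD n with
  | O => fun x => x
  | S m => fun x => (cd_conj m (fst x), cd_opp m (snd x))
  end.

(* Cayley-Dickson product: (a,b)(c,d) = (ac - conj(d) b, d a + b conj(c)) *)
Fixpoint cd_mul (n : nat) : CD n -> CD n -> CD n :=
  match n return CD n -> CD n -> CD n with
  | O => Rmult
  | S m => fun x y =>
      (cd_sub m (cd_mul m (fst x) (fst y)) (cd_mul m (cd_conj m (snd y)) (snd x)),
       cd_add m (cd_mul m (snd y) (fst x)) (cd_mul m (snd x) (cd_conj m (fst y))))
  end.

Fixpoint cd_scale (n : nat) (r : R) : CD n -> CD n :=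
  match n return CD n -> CD n with
  | O => fun x => r * x
  | S m => fun x => (cd_scale m r (fst x), cd_scale m r (snd x))
  end.

Fixpoint cd_nsq (n : nat) : CD n -> R :=
  match n return CD n -> R with
  | O => fun x => x * x
  | S m => fun x => cd_nsq m (fst x) + cd_nsq m (snd x)
  end.

Definition cd_norm (n : nat) (x : CD n) : R := sqrt (cd_nsq n x).

Definition cd_inv (n : nat) (x : CD n) : CD n :=
  cd_scale n (/ cd_nsq n x) (cd_conj n x).

Definition T (n : nat) (a x : CD n) : CD n := cd_sub n (cd_inv n x) a.

Definition is_subring (n : nat) (Z : CD n -> Prop) : Prop :=
  Z (cd_zero n) /\ Z (cd_one n) /\
  (forall x y, Z x -> Z y -> Z (cd_add n x y)) /\
  (forall x, Z x -> Z (cd_opp n x)) /\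
  (forall x y, Z x -> Z y -> Z (cd_mul n x y)).

Definition is_discrete (n : nat) (Z : CD n -> Prop) : Prop :=
  forall z, Z z -> exists eps, 0 < eps /\
    forall w, Z w -> cd_norm n (cd_sub n w z) < eps -> w = z.

Definition conj_closed (n : nat) (Z : CD n -> Prop) : Prop :=
  forall z, Z z -> Z (cd_conj n z).

(* PQ d a i m = (P[a_i,...,a_{i+m}], Q[a_i,...,a_{i+m}]) *)
Fixpoint PQ (d : nat) (a : nat -> CD d) (i m : nat) : CD d * CD d :=
  match m with
  | O => (cd_one d, a i)
  | S m' => let pq := PQ d a (S i) m' in
            (snd pq, cd_add d (cd_mul d (a i) (snd pq)) (fst pq))
  end.

Definition Qc (d : nat) (a : nat -> CD d) (i n : nat) : CD d := snd (PQ d a i (n - i)).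

(* Main.v *)
Require Import Defs.
From Stdlib Require Import Reals Lra Lia.
Open Scope R_scope.
Ltac dall := repeat match goal with x : CD (S _) |- _ => destruct x end.
Ltac peq := repeat match goal with |- (_,_) = (_,_) => f_equal end; repeat match goal with x : CD 0 |- _ => change (CD 0) with R in x end.
Ltac cases d := destruct d as [|[|[|[|d]]]]; [| | | | lia].
Ltac norm := simpl; unfold cd_sub in *; simpl.

Lemma nsq_mul d : (d <= 3)%nat -> forall x y : CD d, cd_nsq d (cd_mul d x y) = cd_nsq d x * cd_nsq d y.
Proof. intros Hd; cases d; intros x y; dall; norm; ring. Qed.
Lemma left_alt d : (d <= 3)%nat -> forall x y : CD d, cd_mul d x (cd_mul d (cd_conj d x) y) = cd_scale d (cd_nsq d x) y.
Proof. intros Hd; cases d; intros x y; dall; simpl; norm; peq; ring. Qed.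
Lemma mul_scale_l d : (d <= 3)%nat -> forall c x y, cd_mul d (cd_scale d c x) y = cd_scale d c (cd_mul d x y).
Proof. intros Hd; cases d; intros c x y; dall; simpl; norm; peq; ring. Qed.
Lemma mul_scale_r d : (d <= 3)%nat -> forall c x y, cd_mul d x (cd_scale d c y) = cd_scale d c (cd_mul d x y).
Proof. intros Hd; cases d; intros c x y; dall; simpl; norm; peq; ring. Qed.
Lemma scale_scale d : (d <= 3)%nat -> forall c e y, cd_scale d c (cd_scale d e y) = cd_scale d (c*e) y.
Proof. intros Hd; cases d; intros c e y; dall; simpl; peq; ring. Qed.
Lemma scale_1 d : (d <= 3)%nat -> forall y, cd_scale d 1 y = y.
Proof. intros Hd; cases d; intros y; dall; simpl; peq; ring. Qed.
Lemma mul_sub_r d : (d <= 3)%nat -> forall x q w, cd_mul d x (cd_sub d q w) = cd_sub d (cd_mul d x q) (cd_mul d x w).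
Proof. intros Hd; cases d; intros x q w; dall; norm; peq; ring. Qed.
Lemma E_id d : (d <= 3)%nat -> forall u a q p, cd_sub d (cd_mul d u q) (cd_add d (cd_mul d a q) p) = cd_sub d (cd_mul d (cd_sub d u a) q) p.
Proof. intros Hd; cases d; intros u a q p; dall; norm; peq; ring. Qed.
Lemma nsq_sub_sym d : (d <= 3)%nat -> forall p q, cd_nsq d (cd_sub d p q) = cd_nsq d (cd_sub d q p).
Proof. intros Hd; cases d; intros p q; dall; norm; ring. Qed.
Lemma mul_one d : (d <= 3)%nat -> forall u, cd_mul d u (cd_one d) = u.
Proof. intros Hd; cases d; intros u; dall; norm; peq; ring. Qed.
Lemma nsq_scale d : (d <= 3)%nat -> forall c y, cd_nsq d (cd_scale d c y) = c*c*cd_nsq d y.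
Proof. intros Hd; cases d; intros c y; dall; simpl; ring. Qed.
Lemma nsq_conj d : (d <= 3)%nat -> forall y, cd_nsq d (cd_conj d y) = cd_nsq d y.
Proof. intros Hd; cases d; intros y; dall; simpl; ring. Qed.
Lemma mul_zero_r d : (d <= 3)%nat -> forall a, cd_mul d a (cd_zero d) = cd_zero d.
Proof. intros Hd; cases d; intros y; dall; norm; peq; ring. Qed.
Lemma add_zero_l d : (d <= 3)%nat -> forall a, cd_add d (cd_zero d) a = a.
Proof. intros Hd; cases d; intros y; dall; simpl; peq; ring. Qed.
Lemma sub_zero_r d : (d <= 3)%nat -> forall a, cd_sub d a (cd_zero d) = a.
Proof. intros Hd; cases d; intros y; dall; norm; peq; ring. Qed.
Lemma nsq_zero d : (d <= 3)%nat -> cd_nsq d (cd_zero d) = 0.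
Proof. intros Hd; cases d; simpl; ring. Qed.
Lemma nsq_one d : (d <= 3)%nat -> cd_nsq d (cd_one d) = 1.
Proof. intros Hd; cases d; simpl; ring. Qed.
Lemma nsq_nonneg d : forall x : CD d, 0 <= cd_nsq d x.
Proof. induction d; simpl; intros x. change (CD O) with R in x; apply Rle_0_sqr. apply Rplus_le_le_0_compat; apply IHd. Qed.
Lemma nsq_eq0 d : forall x : CD d, cd_nsq d x = 0 -> x = cd_zero d.
Proof. induction d; simpl; intros x H. change (CD O) with R in x; nra. destruct x as [x1 x2]; simpl in *.
  pose proof (nsq_nonneg d x1); pose proof (nsq_nonneg d x2).
  rewrite (IHd x1), (IHd x2); auto; lra. Qed.
Lemma one_nz d : (d <= 3)%nat -> cd_one d <> cd_zero d.
Proof. intros Hd H. pose proof (nsq_one d Hd). rewrite H, nsq_zero in H0 by auto. lra. Qed.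

Lemma nsq_nz d (x : CD d) : x <> cd_zero d -> cd_nsq d x <> 0.
Proof. intros H H0; apply H, nsq_eq0; auto. Qed.
Lemma inv_left d : (d <= 3)%nat -> forall x y, x <> cd_zero d -> cd_mul d x (cd_mul d (cd_inv d x) y) = y.
Proof. intros Hd x y Hx. unfold cd_inv. rewrite mul_scale_l, mul_scale_r, left_alt, scale_scale by auto.
  rewrite Rinv_l by (apply nsq_nz; auto). apply scale_1; auto. Qed.
Lemma nsq_inv d : (d <= 3)%nat -> forall x, x <> cd_zero d -> cd_nsq d (cd_inv d x) = / cd_nsq d x.
Proof. intros Hd x Hx. unfold cd_inv. rewrite nsq_scale, nsq_conj by auto.
  pose proof (nsq_nz d x Hx). field; auto. Qed.
Lemma nsq_lt1 d (x : CD d) : cd_norm d x < 1 -> cd_nsq d x < 1.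
Proof. unfold cd_norm; intros H. pose proof (nsq_nonneg d x).
  destruct (Rlt_or_le (cd_nsq d x) 1) as [h|h]; auto.
  apply sqrt_le_1_alt in h. rewrite sqrt_1 in h. lra. Qed.

Fixpoint cpow d (z : CD d) k := match k with O => cd_one d | S k => cd_mul d z (cpow d z k) end.

Lemma integral d (Hd : (d <= 3)%nat) (Z : CD d -> Prop) (HZring : is_subring d Z) (HZdisc : is_discrete d Z) z :
  Z z -> cd_nsq d z < 1 -> z = cd_zero d.
Proof.
  intros Hz Hlt. destruct HZring as [H0 [H1 [Hadd [Hopp Hmul]]]].
  destruct (HZdisc _ H0) as [eps [Heps Hd0]].
  destruct (Req_dec (cd_nsq d z) 0) as [e|ne]. apply nsq_eq0; auto.
  pose proof (nsq_nonneg d z).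
  assert (Hp : forall k, Z (cpow d z k) /\ cd_nsq d (cpow d z k) = cd_nsq d z ^ k).
  { induction k; simpl. split; auto. apply nsq_one; auto.
    destruct IHk as [A B]. split; auto. rewrite nsq_mul, B; auto. }
  destruct (pow_lt_1_zero (cd_nsq d z)) with (y := eps * eps) as [N HN].
  rewrite Rabs_right; lra. nra.
  specialize (HN N (le_n _)). destruct (Hp N) as [A B].
  assert (cpow d z N = cd_zero d).
  { apply Hd0; auto. unfold cd_norm. rewrite sub_zero_r, B by auto.
    rewrite Rabs_right in HN. 2: apply Rle_ge, pow_le; lra.
    rewrite <- (sqrt_square eps) by lra. apply sqrt_lt_1_alt. split. apply pow_le; lra. lra. }
  rewrite H2, nsq_zero in B by auto. exfalso. symmetry in B. exact (pow_nonzero _ N ne B).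
Qed.

Lemma PQ_Z d (Z : CD d -> Prop) (HZring : is_subring d Z) (a : nat -> CD d)
  (Ha : forall n, (1 <= n)%nat -> Z (a n)) :
  forall m i, (1 <= i)%nat -> Z (fst (PQ d a i m)) /\ Z (snd (PQ d a i m)).
Proof.
  destruct HZring as [H0 [H1 [Hadd [Hopp Hmul]]]].
  induction m; intros i Hi; simpl. split; auto.
  destruct (IHm (S i)) as [A B]. lia. split; auto.
Qed.

Lemma PQ_nz d (Hd : (d <= 3)%nat) (a : nat -> CD d) :
  forall m j, ~ (fst (PQ d a j m) = cd_zero d /\ snd (PQ d a j m) = cd_zero d).
Proof.
  induction m; intros j [A B]; simpl in *. apply (one_nz d Hd); auto.
  apply (IHm (S j)). split; auto.
  rewrite A, mul_zero_r, add_zero_l in B by auto. auto.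
Qed.

Theorem lemma2p5 (d : nat) (Hd : (d <= 3)%nat)
  (Z : CD d -> Prop) (HZring : is_subring d Z) (HZdisc : is_discrete d Z)
  (HZconj : conj_closed d Z)
  (a : nat -> CD d) (Ha : forall n, (1 <= n)%nat -> Z (a n))
  (x : nat -> CD d)
  (Hx0 : forall n, x n <> cd_zero d)
  (Hxrec : forall n, x (S n) = T d (a (S n)) (x n))
  (Hxlt : forall n, cd_norm d (x n) < 1) :
  forall n i, (1 <= i)%nat -> (i < n)%nat -> Qc d a i n <> cd_zero d.
Proof.
  assert (HE : forall m k, cd_nsq d (cd_sub d (cd_mul d (cd_inv d (x k)) (fst (PQ d a (S k) m)))
                                                 (snd (PQ d a (S k) m))) < 1).
  { induction m; intros k; simpl.
    - rewrite mul_one by auto. fold (T d (a (S k)) (x k)). rewrite <- Hxrec. apply nsq_lt1; auto.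
    - rewrite E_id by auto. fold (T d (a (S k)) (x k)). rewrite <- Hxrec.
      rewrite <- (inv_left d Hd (x (S k)) (fst (PQ d a (S (S k)) m))) by auto.
      rewrite <- mul_sub_r, nsq_mul, nsq_sub_sym by auto.
      pose proof (IHm (S k)). pose proof (nsq_lt1 _ _ (Hxlt (S k))).
      pose proof (nsq_nonneg d (x (S k))).
      pose proof (nsq_nonneg d (cd_sub d (cd_mul d (cd_inv d (x (S k))) (fst (PQ d a (S (S k)) m)))
         (snd (PQ d a (S (S k)) m)))). nra. }
  intros n i Hi Hin HQ.
  destruct i as [|k]; [lia|].
  unfold Qc in HQ. replace (n - S k)%nat with (S (n - S (S k))) in HQ by lia.
  set (m := (n - S (S k))%nat) in *.
  specialize (HE (S m) k). simpl in HE, HQ. rewrite HQ, sub_zero_r, nsq_mul, nsq_inv in HE by auto.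
  pose proof (nsq_lt1 _ _ (Hxlt k)). pose proof (nsq_nz d _ (Hx0 k)).
  pose proof (nsq_nonneg d (x k)).
  set (q := snd (PQ d a (S (S k)) m)) in *.
  assert (Hq : cd_nsq d q < 1).
  { assert (0 < cd_nsq d (x k)) by lra.
    apply Rmult_lt_compat_l with (r := cd_nsq d (x k)) in HE; auto.
    rewrite <- Rmult_assoc, Rinv_r, Rmult_1_l, Rmult_1_r in HE by lra. lra. }
  assert (q = cd_zero d).
  { apply (integral d Hd Z HZring HZdisc); auto. apply (PQ_Z d Z HZring a Ha). lia. }
  apply (PQ_nz d Hd a m (S (S k))). split; auto.
  rewrite H2 in HQ. rewrite mul_zero_r, add_zero_l in HQ by auto. exact HQ.
Qed.
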